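(* Let $p\in(0,1)$, let $d_p\in(0,1)$ be the $(1-p)$-quantile of $K_{\hat\vartheta}=\sup_{x\in\mathbb{R}}|F_{\hat\vartheta}(x)-F_\vartheta(x)|$, and define $$C_4'=\Big\{\tilde\vartheta\in\Theta:\ \sup_{x\in\mathbb{R}}|F_{\tilde\vartheta}(x)-F_{\hat\vartheta}(x)|\le d_p\Big\},\qquad C_4''=\{(\mu,\sigma)\in C_4':\ \mu\le\hat\mu\}.$$ Let $h:(0,\infty)\to\mathbb{R}$, $h(x)=\ln\big(\frac{d_p}{|1-x|}\big)(x-1)+x\ln x$ for $x\ne1$ and $h(1)=0$, and for $x>0$ $$u(x)=\begin{cases}h(x),&x<1-d_p\\ x\ln(1-d_p),&x\ge1-d_p\end{cases},\qquad o(x)=\begin{cases}-\ln(1-d_p),&x\le\frac1{1-d_p}\\ h(x),&x>\frac1{1-d_p}\end{cases}.$$ Then $$C_4'=\Big\{(\mu,\sigma)\in\Theta:\ u\big(\tfrac{\hat\sigma}{\sigma}\big)\le\frac{\hat\mu-\mu}{\sigma}\le o\big(\tfrac{\hat\sigma}{\sigma}\big)\Big\},$$ $$C_4''=\Big\{(\mu,\sigma)\in\Theta:\ \max\big\{u\big(\tfrac{\hat\sigma}{\sigma}\big),0\big\}\le\frac{\hat\mu-\mu}{\sigma}\le o\big(\tfrac{\hat\sigma}{\sigma}\big)\Big\}.$$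
   Context: Let $1<m\le n$ be integers and $(R_1,\dots,R_m)\in\mathbb{N}_0^m$ with $\sum_{j=1}^mR_j=n-m$; set $\gamma_j=\sum_{i=j}^m(R_i+1)$. A sample of progressively type-II censored order statistics $X=(X_{1:m:n},\dots,X_{m:m:n})$ from an absolutely continuous cdf $F$ with density $f$ has joint density $\prod_{j=1}^m\gamma_jf(x_j)[1-F(x_j)]^{R_j}$ on $x_1\le\dots\le x_m$. Here $F=F_\vartheta$ belongs to the exponential location-scale family: for $\vartheta=(\mu,\sigma)\in\Theta=\mathbb{R}\times(0,\infty)$, $F_\vartheta(x)=1-\exp\{-(x-\mu)/\sigma\}$ for $x>\mu$ and $F_\vartheta(x)=0$ for $x\le\mu$; $\vartheta$ is unknown. The MLEs are $\hat\mu=X_{1:m:n}$ and $\hat\sigma=\frac1m\sum_{j=2}^m\gamma_j(X_{j:m:n}-X_{j-1:m:n})$, and $\hat\vartheta=(\hat\mu,\hat\sigma)$. The distribution of $K_{\hat\vartheta}$ does not depend on $\vartheta$. *)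

(* Defs.v *)
From HB Require Import structures.
From mathcomp Require Import all_boot all_order all_algebra.
From mathcomp Require Import all_classical all_reals all_analysis.
Set Implicit Arguments. Unset Strict Implicit. Unset Printing Implicit Defensive.
Import Order.TTheory GRing.Theory Num.Theory.
Local Open Scope classical_set_scope.
Local Open Scope ring_scope.

Section Defs.
Variable R : realType.

(* cdf of the two-parameter exponential distribution Exp(mu, sigma) *)
Definition Fexp (mu sigma x : R) : R :=
  if x <= mu then 0 else 1 - expR (- ((x - mu) / sigma)).

Definition supdist (mu1 s1 mu2 s2 : R) : R :=
  sup [set `|Fexp mu1 s1 x - Fexp mu2 s2 x| | x in [set: R]].

Definition Theta : set (R * R) := [set th | 0 < th.2].

Definition C4' (d muh sh : R) : set (R * R) :=
  [set th | th \in Theta /\ supdist th.1 th.2 muh sh <= d].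

Definition C4'' (d muh sh : R) : set (R * R) :=
  [set th | th \in C4' d muh sh /\ th.1 <= muh].

Definition hfun (d x : R) : R :=
  if x == 1 then 0 else ln (d / `|1 - x|) * (x - 1) + x * ln x.

Definition ufun (d x : R) : R :=
  if x < 1 - d then hfun d x else x * ln (1 - d).

Definition ofun (d x : R) : R :=
  if x <= (1 - d)^-1 then - ln (1 - d) else hfun d x.

End Defs.

(* Main.v *)
Require Import Defs.
From HB Require Import structures.
From mathcomp Require Import all_boot all_order all_algebra.
From mathcomp Require Import all_classical all_reals all_analysis.
From mathcomp Require Import ring lra.
Import Order.TTheory GRing.Theory Num.Theory.
Local Open Scope classical_set_scope.
Local Open Scope ring_scope.
Section S. Variable R : realType.
Implicit Types a t w d x y : R.

Lemma expR_convex (al A B : R) : 0 <= al <= 1 ->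
  expR (al*A + (1-al)*B) <= al * expR A + (1-al)*expR B.
Proof.
move=> /andP[a0 a1].
set m := al*A + (1-al)*B.
have eA : expR A = expR m * expR (A - m) by rewrite -expRD addrC subrK.
have eB : expR B = expR m * expR (B - m) by rewrite -expRD addrC subrK.
have h1 := expR_ge1Dx (A - m); have h2 := expR_ge1Dx (B - m).
have key : 1 <= al * expR (A-m) + (1-al)*expR(B-m).
  have e : al*(1 + (A-m)) + (1-al)*(1+(B-m)) = 1 by rewrite /m; ring.
  nra.
rewrite eA eB.
have -> : al * (expR m * expR (A - m)) + (1 - al) * (expR m * expR (B - m)) = expR m * (al * expR (A-m) + (1-al)*expR(B-m)) by ring.
by rewrite -[leLHS]mulr1 ler_wpM2l // ltW // expR_gt0.
Qed.

Lemma le_lnE x y : 0 < x -> (ln x <= y) = (x <= expR y).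
Proof. by move=> x0; rewrite -{1}(@expRK R y) ler_ln // posrE expR_gt0. Qed.
Lemma ge_lnE x y : 0 < x -> (y <= ln x) = (expR y <= x).
Proof. by move=> x0; rewrite -{1}(@expRK R y) ler_ln // posrE expR_gt0. Qed.
Lemma lt_lnE x y : 0 < x -> (y < ln x) = (expR y < x).
Proof. by move=> x0; rewrite -{1}(@expRK R y) ltr_ln // posrE expR_gt0. Qed.

Lemma L1 a t w : 0 < a < 1 ->
  expR (-(w+t)) - expR (-(w/a)) <= (1-a) * expR ((a*ln a - t)/(1-a)).
Proof.
move=> /andP[a0 a1].
have := @expR_convex a (-(w/a) - ln a) ((a*ln a - t)/(1-a)).
have -> : a * (- (w / a) - ln a) + (1 - a) * ((a * ln a - t) / (1 - a)) = -(w+t).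
  field; apply/andP; split; lra.
rewrite expRB lnK ?posrE //.
have -> : a * (expR (- (w / a)) / a) = expR (- (w / a)) by field; lra.
move=> H; have : 0 <= a <= 1 by lra.
move=> /H; lra.
Qed.

Lemma L2 a t w : 1 < a ->
  expR (-(w/a)) - expR (-(w+t)) <= (1-a^-1) * expR ((t - ln a)/(a-1)).
Proof.
move=> a1.
have := @expR_convex a^-1 (-(w+t) + ln a) ((t - ln a)/(a-1)).
have -> : a^-1 * (-(w+t) + ln a) + (1 - a^-1) * ((t - ln a)/(a-1)) = -(w/a).
  field; apply/andP; split; lra.
rewrite expRD lnK ?posrE; last lra.
have -> : a^-1 * (expR (- (w + t)) * a) = expR (- (w + t)) by field; lra.
have ia : 0 < a^-1 < 1.
  rewrite invr_gt0 invf_lt1; lra.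
move=> H; have : 0 <= a^-1 <= 1 by lra.
move=> /H; lra.
Qed.

Definition hf_unused d x : R :=
  if x == 1 then 0 else ln (d / `|1 - x|) * (x - 1) + x * ln x.

Lemma H1 d a t : 0 < d -> 0 < a < 1 ->
  ((1-a) * expR ((a*ln a - t)/(1-a)) <= d) = (hfun d a <= t).
Proof.
move=> d0 /andP[a0 a1].
rewrite /hfun ifF; last by apply/negbTE; rewrite neq_lt a1.
rewrite gtr0_norm; last lra.
rewrite mulrC -ler_pdivlMr; last lra.
rewrite -ge_lnE; last by rewrite divr_gt0 //; lra.
rewrite ler_pdivrMr; last lra.
set L := ln (d / (1 - a)).
apply/idP/idP => H; nra.
Qed.

Lemma H2 d a t : 0 < d -> 1 < a ->
  ((1-a^-1) * expR ((t - ln a)/(a-1)) <= d) = (t <= hfun d a).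
Proof.
move=> d0 a1.
rewrite /hfun ifF; last by apply/negbTE; rewrite neq_lt a1 orbT.
rewrite ltr0_norm; last lra.
have -> : 1 - a^-1 = (a-1)/a by field; lra.
rewrite mulrC -ler_pdivlMr; last by rewrite divr_gt0; lra.
rewrite -ge_lnE; last by rewrite divr_gt0 // divr_gt0; lra.
have -> : d / ((a-1)/a) = a * (d / (- (1 - a))).
  field; apply/andP; split; lra.
rewrite lnM ?posrE; [|lra| rewrite divr_gt0 //; lra].
rewrite ler_pdivrMr; last lra.
set L := ln (d / (- (1 - a))).
apply/idP/idP => H; nra.
Qed.

Definition G x : R := if x <= 0 then 0 else 1 - expR (- x).
Lemma G_le0 x : x <= 0 -> G x = 0.
Proof. by rewrite /G => ->. Qed.
Lemma G_ge0 x : 0 <= x -> G x = 1 - expR (- x).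
Proof.
rewrite /G le_eqVlt => /orP[/eqP<-|x0]; first by rewrite lexx oppr0 expR0 subrr.
by rewrite leNgt x0.
Qed.
Arguments G_le0 {x}.
Arguments G_ge0 {x}.

Section Core.
Variables (d a t : R).

Lemma lnd_le0 : 0 < d -> d < 1 -> ln (1 - d) < 0 :> R.
Proof. move=> d0 d1; apply: ln_lt0; apply/andP; split; lra. Qed.

Lemma N1 (d0 : 0 < d) (d1 : d < 1) (a0 : 0 < a) (Hall : forall w, `|G (w + t) - G (w / a)| <= d) : t <= - ln (1 - d).
Proof.
have := lnd_le0 d0 d1.
case: (lerP t 0) => t0; first lra.
have := Hall 0; rewrite add0r mul0r (@G_le0 0 (lexx 0)) subr0 G_ge0; last lra.
rewrite ler_norml => /andP[_ H].
have : ln (1 - d) <= - t by rewrite le_lnE; lra.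
lra.
Qed.

Lemma N2 (d0 : 0 < d) (d1 : d < 1) (a0 : 0 < a) (Hall : forall w, `|G (w + t) - G (w / a)| <= d) : a * ln (1 - d) <= t.
Proof.
have := lnd_le0 d0 d1.
case: (lerP 0 t) => t0; first nra.
have := Hall (-t); rewrite addNr (@G_le0 0 (lexx 0)) sub0r G_ge0; last first.
  rewrite mulNr oppr_ge0 pmulr_lle0 ?invr_gt0 //; lra.
rewrite mulNr opprK ler_norml => /andP[H _].
have : ln (1 - d) <= t / a by rewrite le_lnE; lra.
rewrite ler_pdivlMr // mulrC; lra.
Qed.

Lemma N3 (d0 : 0 < d) (d1 : d < 1) (a0 : 0 < a) (Hall : forall w, `|G (w + t) - G (w / a)| <= d) : a < 1 - d -> hfun d a <= t.
Proof.
move=> ad.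
have a1 : a < 1 by lra.
have n2 := N2 d0 d1 a0 Hall.
rewrite -(@H1 d a t) //; last by apply/andP; split; lra.
set B := (a * ln a - t) / (1 - a).
have la : ln a <= 0 by apply: ln_le0; lra.
have hB : B <= 0.
  rewrite /B ler_pdivrMr; last lra.
  have : ln a <= ln (1 - d) by rewrite ler_ln ?posrE; lra.
  nra.
have hB2 : B + ln a <= 0.
  have -> : B + ln a = (ln a - t)/(1-a) by rewrite /B; field; lra.
  rewrite ler_pdivrMr; last lra.
  have : ln a <= ln (1 - d) by rewrite ler_ln ?posrE; lra.
  nra.
have := Hall (- B - t).
have -> : - B - t + t = - B by ring.
have -> : (- B - t) / a = - (B + ln a).
  rewrite /B; field; apply/andP; split; lra.
rewrite !G_ge0 ?oppr_ge0 // !opprK expRD lnK ?posrE //.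
rewrite ler_norml => /andP[H _].
lra.
Qed.

Lemma N4 (d0 : 0 < d) (d1 : d < 1) (a0 : 0 < a) (Hall : forall w, `|G (w + t) - G (w / a)| <= d) : (1 - d)^-1 < a -> t <= hfun d a.
Proof.
move=> ad.
have id1 : 1 < (1 - d)^-1 by rewrite invf_gt1; lra.
have a1 : 1 < a by lra.
have n1 := N1 d0 d1 a0 Hall.
rewrite -(@H2 d a t) //.
set B := (t - ln a) / (a - 1).
have la : 0 <= ln a by apply: ln_ge0; lra.
have tla : t <= ln a.
  have : ln (1 - d)^-1 <= ln a by rewrite ler_ln ?posrE; lra.
  rewrite lnV ?posrE; lra.
have hB : B <= 0.
  by rewrite /B ler_pdivrMr; lra.
have hB2 : B - ln a <= 0.
  rewrite /B subr_le0 ler_pdivrMr; [nra|lra].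
have := Hall (- (a * B)).
have -> : - (a * B) + t = - (B - ln a) by rewrite /B; field; lra.
have -> : - (a * B) / a = - B by field; lra.
rewrite !G_ge0 ?oppr_ge0 // !opprK expRB lnK ?posrE; last lra.
rewrite ler_norml => /andP[_ H].
have -> : (1 - a^-1) * expR B = expR B - expR B / a by field; lra.
lra.
Qed.
End Core.

Lemma back d a t (d0 : 0 < d) (d1 : d < 1) (a0 : 0 < a)
  (Hu : ufun d a <= t) (Ho : t <= ofun d a) :
  forall w, `|G (w + t) - G (w / a)| <= d.
Proof.
have lnd := @lnd_le0 d d0 d1.
have id1 : 1 < (1 - d)^-1 by rewrite invf_gt1; lra.
have E1 : t <= - ln (1 - d).
  move: Ho; rewrite /ofun; case: ifP => ha Ho; first done.
  have ha' : (1 - d)^-1 < a by rewrite ltNge ha.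
  have a1 : 1 < a by lra.
  have := L2 a t 0 a1; rewrite mul0r oppr0 expR0 add0r.
  move: Ho; rewrite -(@H2 d a t d0 a1) => Ho H.
  have : ln (1 - d) <= - t by rewrite le_lnE; lra.
  lra.
have E2 : a * ln (1 - d) <= t.
  move: Hu; rewrite /ufun; case: ifP => ha Hu; last done.
  have a1 : 0 < a < 1 by apply/andP; split; lra.
  have := L1 a t (-t) a1; rewrite addNr oppr0 expR0 mulNr opprK.
  move: Hu; rewrite -(@H1 d a t d0 a1) => Hu H.
  have : ln (1 - d) <= t / a by rewrite le_lnE; lra.
  rewrite ler_pdivlMr // mulrC; lra.
have E1' : 1 - expR (- t) <= d.
  have : ln (1 - d) <= - t by lra.
  rewrite le_lnE; lra.
have E2' : 1 - expR (t / a) <= d.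
  have : ln (1 - d) <= t / a by rewrite ler_pdivlMr // mulrC.
  rewrite le_lnE; lra.
move=> w.
case: (lerP w 0) => w0.
  have wa : w / a <= 0 by rewrite ler_pdivrMr // mul0r.
  rewrite (G_le0 wa) subr0.
  case: (lerP (w + t) 0) => wt; first by rewrite G_le0 // normr0 ltW.
  rewrite (G_ge0 (ltW wt)).
  have : expR (- t) <= expR (- (w + t)) by rewrite ler_expR; lra.
  have : expR (- (w + t)) <= 1 by rewrite expR_le1; lra.
  rewrite ler_norml => ? ?; apply/andP; split; lra.
have wa : 0 < w / a by rewrite divr_gt0.
rewrite (G_ge0 (ltW wa)).
case: (lerP (w + t) 0) => wt.
  rewrite (G_le0 wt) sub0r normrN.
  have : t / a <= - (w / a).
    rewrite -mulNr; apply: ler_wpM2r; [rewrite invr_ge0 ltW // | lra].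
  rewrite -ler_expR => H.
  have : expR (- (w / a)) <= 1 by rewrite expR_le1; lra.
  rewrite ler_norml => ?; apply/andP; split; lra.
rewrite (G_ge0 (ltW wt)).
set ewa := expR (- (w / a)); set ewt := expR (- (w + t)).
suff [Up Lo] : ewa - ewt <= d /\ ewt - ewa <= d.
  rewrite ler_norml; apply/andP; split; lra.
have ewt_e : ewt = expR (- w) * expR (- t) by rewrite /ewt opprD expRD.
have ew1 : expR (- w) <= 1 by rewrite expR_le1; lra.
have ew0 := expR_gt0 (- w).
have et0 := expR_gt0 (- t).
split.
- case: (lerP a 1) => a1.
    have : ewa <= expR (- w).
      rewrite ler_expR lerN2 ler_pdivlMr //; nra.
    case: (lerP 0 (1 - expR (- t))) => ht; nra.
  have iaa : a^-1 * a = 1 by rewrite mulVf //; lra.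
  have ia0 : 0 < a^-1 by rewrite invr_gt0.
  case: (lerP a (1 - d)^-1) => ad.
    have qd : (1 - d)^-1 * (1 - d) = 1 by rewrite mulVf //; lra.
    have h1 : a * (1 - d) <= 1 by nra.
    have h2 : 1 - d <= a^-1 by nra.
    case: (lerP t (ln a)) => tl.
      have := L2 a t w a1; rewrite -/ewa -/ewt.
      have : expR ((t - ln a) / (a - 1)) <= 1.
        rewrite expR_le1 ler_pdivrMr; lra.
      have : a^-1 <= 1 by rewrite invf_le1; lra.
      nra.
    have := @expR_convex a^-1 (- w) 0.
    rewrite mulr0 addr0 expR0 mulr1 mulrN mulrC.
    have : 0 <= a^-1 <= 1 by rewrite ltW //= invf_le1; lra.
    move=> H /(_ H) Hc.
    have : expR (- t) < a^-1.
      by rewrite -(lnK (x := a)) ?posrE // -expRN ltr_expR; lra.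
    rewrite -/ewa in Hc; rewrite ewt_e; nra.
  have a1' : 1 < a by lra.
  have := L2 a t w a1'; rewrite -/ewa -/ewt.
  move: Ho; rewrite /ofun ifF; last by apply/negbTE; rewrite -ltNge.
  rewrite -(@H2 d a t d0 a1'); lra.
- case: (lerP 1 a) => a1.
    case: (lerP 0 t) => t0.
      have : ewt <= expR (- w) by rewrite ler_expR; lra.
      have : expR (- w) <= ewa.
        rewrite ler_expR lerN2 ler_pdivrMr //; nra.
      lra.
    have -> : ewa = expR (t / a) * expR (- ((w + t) / a)).
      by rewrite /ewa -expRD; congr expR; field; lra.
    have : ewt <= expR (- ((w + t) / a)).
      rewrite ler_expR lerN2 ler_pdivrMr //; nra.
    have : expR (- ((w + t) / a)) <= 1.
      rewrite expR_le1 oppr_le0; apply: divr_ge0; lra.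
    have : expR (t / a) <= 1.
      rewrite expR_le1 ler_pdivrMr //; lra.
    have := expR_gt0 (t / a); have := expR_gt0 (- ((w + t) / a)).
    nra.
  case: (lerP (1 - d) a) => ad.
    have a01 : 0 < a < 1 by apply/andP; split; lra.
    case: (lerP (a * ln a) t) => tl.
      have := L1 a t w a01; rewrite -/ewa -/ewt.
      have : expR ((a * ln a - t) / (1 - a)) <= 1.
        rewrite expR_le1 ler_pdivrMr; lra.
      nra.
    have -> : ewa = expR (t / a) * expR (- ((w + t) / a)).
      by rewrite /ewa -expRD; congr expR; field; lra.
    have := @expR_convex a (- ((w + t) / a)) 0.
    rewrite mulr0 addr0 expR0 mulr1.
    have -> : a * - ((w + t) / a) = - (w + t) by field; lra.
    have : 0 <= a <= 1 by apply/andP; split; lra.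
    move=> H /(_ H) Hc.
    have : expR (t / a) < a.
      rewrite -lt_lnE // ltr_pdivrMr //; lra.
    have : expR (- ((w + t) / a)) <= 1.
      rewrite expR_le1 oppr_le0; apply: divr_ge0; lra.
    have := expR_gt0 (- ((w + t) / a)).
    rewrite -/ewt in Hc *; nra.
  have a01 : 0 < a < 1 by apply/andP; split; lra.
  have := L1 a t w a01; rewrite -/ewa -/ewt.
  move: Hu; rewrite /ufun ifT // -(@H1 d a t d0 a01); lra.
Qed.

Lemma G_range z : 0 <= G z <= 1.
Proof.
rewrite /G; case: ifP => z0; first by rewrite lexx ler01.
have := expR_gt0 (- z); have : expR (- z) <= 1 by rewrite expR_le1; move/negbT: z0; rewrite -ltNge; lra.
move=> ? ?; apply/andP; split; lra.
Qed.

Lemma Fexp_G mu s x : 0 < s -> Fexp mu s x = G ((x - mu) / s).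
Proof.
move=> s0; rewrite /Fexp /G ler_pdivrMr // mul0r subr_le0.
by case: ifP.
Qed.

Lemma supdist_leP mu s muh sh d : 0 < s -> 0 < sh ->
  (supdist mu s muh sh <= d) <-> (forall x, `|Fexp mu s x - Fexp muh sh x| <= d).
Proof.
move=> s0 sh0; split => H.
  have hub : has_ubound [set `|Fexp mu s x - Fexp muh sh x| | x in [set: R]].
    exists 1 => _ [x _ <-].
    rewrite !Fexp_G //.
    have := G_range ((x - mu) / s); have := G_range ((x - muh) / sh).
    move=> /andP[? ?] /andP[? ?]; rewrite ler_norml; apply/andP; split; lra.
  move=> x; apply: le_trans H; apply: (ub_le_sup hub); by exists x.
apply: ge_sup; first by exists `|Fexp mu s 0 - Fexp muh sh 0|, 0.
by move=> _ [x _ <-].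
Qed.

Lemma transfer mu s muh sh d : 0 < s -> 0 < sh ->
  (forall x, `|Fexp mu s x - Fexp muh sh x| <= d) <->
  (forall w, `|G (w + (muh - mu) / s) - G (w / (sh / s))| <= d).
Proof.
move=> s0 sh0; split => H w.
  have := H (muh + s * w); rewrite !Fexp_G //.
  have -> : (muh + s * w - mu) / s = w + (muh - mu) / s by field; lra.
  have -> : (muh + s * w - muh) / sh = w / (sh / s) by field; apply/andP; split; lra.
  done.
have := H ((w - muh) / s); rewrite !Fexp_G //.
have -> : (w - muh) / s + (muh - mu) / s = (w - mu) / s by field; lra.
have -> : (w - muh) / s / (sh / s) = (w - muh) / sh by field; apply/andP; split; lra.
done.
Qed.

Lemma key d muh sh mu s : 0 < d < 1 -> 0 < sh -> 0 < s ->
  (supdist mu s muh sh <= d) <->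
  (ufun d (sh / s) <= (muh - mu) / s <= ofun d (sh / s)).
Proof.
move=> /andP[d0 d1] sh0 s0.
have a0 : 0 < sh / s by rewrite divr_gt0.
rewrite supdist_leP // transfer //.
split => [H|/andP[Hu Ho]]; last exact: back.
apply/andP; split.
  rewrite /ufun; case: ifP => ha.
    exact: (@N3 _ _ _ d0 d1 a0 H ha).
  exact: (@N2 _ _ _ d0 d1 a0 H).
rewrite /ofun; case: ifP => ha.
  exact: (@N1 _ _ _ d0 d1 a0 H).
apply: (@N4 _ _ _ d0 d1 a0 H).
by rewrite ltNge ha.
Qed.
End S.

Theorem theorem4 (R : realType) (d muh sh : R) :
  0 < d < 1 -> 0 < sh ->
  C4' d muh sh =
    [set th : R * R | 0 < th.2 /\
       ufun d (sh / th.2) <= (muh - th.1) / th.2 <= ofun d (sh / th.2)] /\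
  C4'' d muh sh =
    [set th : R * R | 0 < th.2 /\
       Num.max (ufun d (sh / th.2)) 0 <= (muh - th.1) / th.2
       <= ofun d (sh / th.2)].
Proof.
move=> dd sh0.
have E : C4' d muh sh =
    [set th : R * R | 0 < th.2 /\
       ufun d (sh / th.2) <= (muh - th.1) / th.2 <= ofun d (sh / th.2)].
  apply/seteqP; split => -[mu s] /=; rewrite /C4' /= in_setE /Theta /=.
    by move=> [s0 H]; split => //; apply/key.
  by move=> [s0 H]; split => //; apply/key.
split => //.
apply/seteqP; split => -[mu s] /=; rewrite /C4'' /= in_setE E /=.
  move=> [[s0 /andP[Hu Ho]] hm]; split => //.
  rewrite ge_max Hu Ho /= ler_pdivlMr // mul0r subr_ge0 hm.
  by [].
move=> [s0 /andP[]]; rewrite ge_max => /andP[Hu Ht] Ho.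
split; first by split => //; rewrite Hu Ho.
by move: Ht; rewrite ler_pdivlMr // mul0r subr_ge0.
Qed.
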